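(* Let $\mathcal{T}^*$ be the category of rooted simplicial trees and rooted metrically proper homotopy classes of rooted continuous metrically proper maps. The assignment $\eta$ given by $\eta(T,v)=(C_n,p_n)_{n\ge1}$, where $C_n$ is the set of vertices at distance $n$ from $v$ and $p_n:C_{n+1}\to C_n$ sends a vertex to its unique adjacent vertex at distance $n$ from $v$, and, for a rooted continuous metrically proper map $f:(T,v)\to(T',w)$, $\eta(f)=$ the class in \textbf{Tower-Set} of $(f_n,\Phi_f)$, where $(t_n)$ is a strictly increasing sequence of integers with $f^{-1}(B(w,n))\subset B(v,t_n)$, $\Phi_f(n)=t_n$, and $f_n(c)$ for $c\in C_{t_n}$ is the unique vertex $c'$ of $T'$ at distance $n$ from $w$ with $f(T_c)\subset T'_{c'}$, is a well-defined functor $\mathcal{T}^*\to\textbf{Tower-Set}$.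
   Context: A rooted simplicial tree $(T,v)$ is the geometric realization of a simplicial tree, each edge of length 1, with the path metric and a distinguished root vertex $v$. $B(x,r)$ is the open ball. For $c\in T$, $T_c=\{x\in T: c\in[v,x]\}$, $[v,x]$ the unique arc. Metrically proper: preimages of bounded sets are bounded; rooted: root to root. A rooted metrically proper homotopy between rooted continuous metrically proper maps $f,f':(T,v)\to(T',w)$ is a continuous $H:T\times[0,1]\to T'$ with $H(\cdot,0)=f$, $H(\cdot,1)=f'$, $H(v,s)=w$, and such that for all $M>0$ there is $N>0$ with $H^{-1}(B(w,M))\subset B(v,N)\times[0,1]$. \textbf{Tower-Set}: objects are inverse sequences $(X_n,p_n)_{n\ge1}$ of sets, $p_n:X_{n+1}\to X_n$, $p_{nm}=p_n\circ\cdots\circ p_{m-1}$; a morphism $(f_n,\Phi)$ consists of $\Phi:\mathbb{N}\to\mathbb{N}$ and maps $f_n:X_{\Phi(n)}\to Y_n$ such that for all $n'>n$ there is $m\ge\Phi(n),\Phi(n')$ with $f_n\circ p_{\Phi(n)m}=q_{nn'}\circ f_{n'}\circ p_{\Phi(n')m}$; morphisms $(f_n,\Phi),(g_n,\Psi)$ are identified if each $n$ admits $m\ge\Phi(n),\Psi(n)$ with $f_n\circ p_{\Phi(n)m}=g_n\circ p_{\Psi(n)m}$; composition is $(g_n\circ f_{\Psi(n)},\Phi\circ\Psi)$. *)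

(* Defs.v *)
From Stdlib Require Import Reals Lra Arith ClassicalEpsilon.
Open Scope R_scope.

(* A rooted simplicial tree is encoded by its vertex type V, its root,  *)
(* and the "parent" map (the unique neighbour closer to the root); the  *)
(* edges are {x, par x} for x <> root.  Every vertex reaches the root   *)
(* by iterating par (connectedness; acyclicity is automatic).           *)
(* Convention: par root = root.                                         *)
Record tree : Type := Tree {
  V : Type;
  root : V;
  par : V -> V;
  par_root : par root = root;
  reach : forall x : V, exists k : nat, Nat.iter k par x = root }.

Arguments root {t}.
Arguments par {t} _.

Definition depth (T : tree) (x : V T) : nat :=
  epsilon (inhabits 0%nat)
    (fun k => Nat.iter k par x = root /\
              forall j, Nat.iter j par x = root -> (k <= j)%nat).

Definition anc (T : tree) (z x : V T) : Prop :=
  exists k : nat, Nat.iter k par x = z.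

(* Geometric realization.  A point is a pair (x, t) with 0 < t <= 1:   *)
(* the point of the edge [par x, x] at distance t from par x (t = 1 is  *)
(* the vertex x itself); the root is (root, 1).                         *)
Record point (T : tree) : Type := Point {
  pv : V T;
  pt : R;
  pt_pos : 0 < pt;
  pt_le1 : pt <= 1;
  pt_root : pv = root -> pt = 1 }.

Arguments pv {T} _.
Arguments pt {T} _.

Definition vpt {T : tree} (x : V T) : point T :=
  Point T x 1 Rlt_0_1 (Rle_refl 1) (fun _ => eq_refl).

Definition droot (T : tree) : point T := vpt (@root T).

Definition height {T : tree} (a : point T) : R :=
  INR (depth T (pv a)) + pt a - 1.

(* a lies on the arc [root, b] *)
Definition ple {T : tree} (a b : point T) : Prop :=
  (pv a = pv b /\ pt a <= pt b) \/ (pv a <> pv b /\ anc T (pv a) (pv b)).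

Definition meet_height {T : tree} (a b : point T) : R :=
  epsilon (inhabits 0)
    (fun r => exists c, ple c a /\ ple c b /\ height c = r /\
              forall c', ple c' a -> ple c' b -> height c' <= r).

(* path metric of the realization (edges of length 1) *)
Definition dist {T : tree} (a b : point T) : R :=
  height a + height b - 2 * meet_height a b.

Definition ball {T : tree} (x : point T) (r : R) : point T -> Prop :=
  fun y => dist x y < r.

Definition subtree {T : tree} (c : V T) : point T -> Prop :=
  fun x => ple (vpt c) x.

Definition rooted {T T' : tree} (f : point T -> point T') : Prop :=
  f (droot T) = droot T'.

Definition cont_map {T T' : tree} (f : point T -> point T') : Prop :=
  forall a eps, 0 < eps -> exists del, 0 < del /\
    forall b, dist a b < del -> dist (f a) (f b) < eps.

Definition mproper {T T' : tree} (f : point T -> point T') : Prop :=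
  forall M, 0 < M -> exists N, 0 < N /\
    forall a, ball (droot T') M (f a) -> ball (droot T) N a.

Definition rcp {T T' : tree} (f : point T -> point T') : Prop :=
  rooted f /\ cont_map f /\ mproper f.

(* rooted metrically proper homotopy; continuity on T x [0,1] with the
   product (max) metric *)
Definition rp_homotopy {T T' : tree} (f f' : point T -> point T')
    (H : point T -> R -> point T') : Prop :=
  (forall a s eps, 0 <= s <= 1 -> 0 < eps -> exists del, 0 < del /\
     forall b s', 0 <= s' <= 1 -> dist a b < del -> Rabs (s - s') < del ->
       dist (H a s) (H b s') < eps) /\
  (forall a, H a 0 = f a) /\
  (forall a, H a 1 = f' a) /\
  (forall s, 0 <= s <= 1 -> H (droot T) s = droot T') /\
  (forall M, 0 < M -> exists N, 0 < N /\
     forall a s, 0 <= s <= 1 -> ball (droot T') M (H a s) -> ball (droot T) N a).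

Definition rp_homotopic {T T' : tree} (f f' : point T -> point T') : Prop :=
  exists H, rp_homotopy f f' H.

(* Tower-Set.  An inverse sequence of sets (X_n, p_n)_{n>=1} is encoded *)
(* by an ambient type TX, membership predicates Tmem n (X_n), and maps  *)
(* Tp n (p_n : X_{n+1} -> X_n, only its values on X_{n+1} matter).      *)
(* Level 0 is ignored.                                                  *)
Record tower : Type := Tower {
  TX : Type;
  Tmem : nat -> TX -> Prop;
  Tp : nat -> TX -> TX }.

Definition is_tower (X : tower) : Prop :=
  forall n x, (1 <= n)%nat -> Tmem X (S n) x -> Tmem X n (Tp X n x).

Fixpoint pd {A : Type} (p : nat -> A -> A) (n k : nat) (x : A) : A :=
  match k with
  | O => x
  | S k' => pd p n k' (p (n + k')%nat x)
  end.

Definition pnm (X : tower) (n m : nat) : TX X -> TX X :=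
  pd (Tp X) n (m - n).

Record tmor (X Y : tower) : Type := TMor {
  tPhi : nat -> nat;
  tf : nat -> TX X -> TX Y }.

Arguments tPhi {X Y} _ _.
Arguments tf {X Y} _ _ _.

Definition is_tmor {X Y : tower} (F : tmor X Y) : Prop :=
  (forall n, (1 <= n)%nat -> (1 <= tPhi F n)%nat) /\
  (forall n x, (1 <= n)%nat -> Tmem X (tPhi F n) x -> Tmem Y n (tf F n x)) /\
  (forall n n', (1 <= n)%nat -> (n < n')%nat ->
     exists m, (tPhi F n <= m)%nat /\ (tPhi F n' <= m)%nat /\
       forall x, Tmem X m x ->
         tf F n (pnm X (tPhi F n) m x) =
         pnm Y n n' (tf F n' (pnm X (tPhi F n') m x))).

Definition tmor_eq {X Y : tower} (F G : tmor X Y) : Prop :=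
  forall n, (1 <= n)%nat ->
    exists m, (tPhi F n <= m)%nat /\ (tPhi G n <= m)%nat /\
      forall x, Tmem X m x ->
        tf F n (pnm X (tPhi F n) m x) = tf G n (pnm X (tPhi G n) m x).

Definition tmor_id (X : tower) : tmor X X := TMor X X (fun n => n) (fun _ x => x).

Definition tmor_comp {X Y Z : tower} (F : tmor X Y) (G : tmor Y Z) : tmor X Z :=
  TMor X Z (fun n => tPhi F (tPhi G n)) (fun n x => tf G n (tf F (tPhi G n) x)).

Definition eta_obj (T : tree) : tower :=
  Tower (V T) (fun n x => depth T x = n) (fun _ x => par x).

Definition eta_seq {T T' : tree} (f : point T -> point T') (Phi : nat -> nat) : Prop :=
  (forall n, (1 <= n)%nat -> (Phi n < Phi (S n))%nat) /\
  (forall n a, (1 <= n)%nat ->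
     ball (droot T') (INR n) (f a) -> ball (droot T) (INR (Phi n)) a).

Definition eta_data {T T' : tree} (f : point T -> point T')
    (F : tmor (eta_obj T) (eta_obj T')) : Prop :=
  eta_seq f (tPhi F) /\
  (forall n (c : V T), (1 <= n)%nat -> depth T c = tPhi F n ->
     depth T' (tf F n c) = n /\
     forall a, subtree c a -> subtree (tf F n c) (f a)).

(* Main.v *)
Require Import Defs.
From Stdlib Require Import Reals Lra Lia Arith Classical ClassicalEpsilon ProofIrrelevance FunctionalExtensionality PropExtensionality.
Require Import Defs.
Open Scope R_scope.

Lemma least_nat (P : nat -> Prop) : (exists k, P k) -> exists k, P k /\ forall j, P j -> (k <= j)%nat.
Proof.
  intros [k Hk]. revert Hk. induction k as [k IH] using (well_founded_induction lt_wf).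
  intros Hk. destruct (classic (exists j, (j < k)%nat /\ P j)) as [[j [Hj Pj]]|N].
  - apply (IH j Hj Pj).
  - exists k. split; auto. intros j Pj. destruct (le_lt_dec k j); auto.
    exfalso; apply N; eauto.
Qed.

Lemma depth_spec (T : tree) (x : V T) :
  Nat.iter (depth T x) par x = root /\ forall j, Nat.iter j par x = root -> (depth T x <= j)%nat.
Proof.
  unfold depth. apply epsilon_spec. apply least_nat. apply reach.
Qed.

Lemma iter_root (T : tree) k : Nat.iter k (@par T) root = root.
Proof. induction k; simpl; auto. rewrite IHk. apply par_root. Qed.

Lemma depth_root (T : tree) : depth T root = 0%nat.
Proof. destruct (depth_spec T root) as [_ H]. specialize (H 0%nat eq_refl). lia. Qed.

Lemma depth0 (T : tree) x : depth T x = 0%nat -> x = root.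
Proof. intros H. destruct (depth_spec T x) as [H1 _]. rewrite H in H1. exact H1. Qed.

Lemma depth_par (T : tree) x : depth T (par x) = (depth T x - 1)%nat.
Proof.
  destruct (depth_spec T x) as [H1 H2]. destruct (depth_spec T (par x)) as [H3 H4].
  remember (depth T x) as d. destruct d as [|d].
  - simpl in H1. subst x. rewrite par_root, depth_root. lia.
  - assert (Hd : (depth T (par x) <= d)%nat).
    { apply H4. rewrite <- Nat.iter_succ_r. exact H1. }
    assert (S d <= S (depth T (par x)))%nat.
    { apply H2. rewrite Nat.iter_succ_r. exact H3. }
    lia.
Qed.

Lemma depth_iter (T : tree) k x : depth T (Nat.iter k par x) = (depth T x - k)%nat.
Proof.
  induction k; simpl. lia. rewrite depth_par, IHk. lia.
Qed.

Lemma anc_same_depth (T : tree) u v x : anc T u x -> anc T v x -> depth T u = depth T v -> u = v.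
Proof.
  intros [i Hi] [j Hj] E. subst u v. rewrite !depth_iter in E.
  destruct (Nat.eq_dec (depth T x - i) 0) as [Z|Z].
  - rewrite (depth0 T (Nat.iter i par x)); [|rewrite depth_iter; lia].
    rewrite (depth0 T (Nat.iter j par x)); [|rewrite depth_iter; lia]. auto.
  - assert (i = j) by lia. subst; auto.
Qed.

Lemma anc_lin (T : tree) u v x : anc T u x -> anc T v x -> (depth T u <= depth T v)%nat -> anc T u v.
Proof.
  intros [i Hi] [j Hj] E. subst u v. rewrite !depth_iter in E.
  destruct (le_lt_dec j i).
  - exists (i - j)%nat. rewrite <- Nat.iter_add. f_equal. lia.
  - exists 0%nat. simpl.
    rewrite (depth0 T (Nat.iter i par x)); [|rewrite depth_iter; lia].
    rewrite (depth0 T (Nat.iter j par x)); [|rewrite depth_iter; lia]. auto.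
Qed.

Lemma anc_trans (T : tree) u v x : anc T u v -> anc T v x -> anc T u x.
Proof. intros [i Hi] [j Hj]. exists (i + j)%nat. rewrite Nat.iter_add. congruence. Qed.

Lemma anc_root (T : tree) x : anc T root x.
Proof. apply reach. Qed.

Lemma anc_depth (T : tree) u x : anc T u x -> (depth T u <= depth T x)%nat.
Proof. intros [i Hi]; subst; rewrite depth_iter; lia. Qed.

Lemma anc_depth_lt (T : tree) u x : anc T u x -> u <> x -> (depth T u < depth T x)%nat.
Proof.
  intros [i Hi] N; subst. rewrite depth_iter.
  destruct i. simpl in N; congruence.
  destruct (Nat.eq_dec (depth T x) 0) as [Z|Z].
  - apply depth0 in Z. subst x. rewrite iter_root in N. congruence.
  - lia.
Qed.

Lemma dca (T : tree) x1 x2 : exists w, anc T w x1 /\ anc T w x2 /\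
  forall u, anc T u x1 -> anc T u x2 -> (depth T u <= depth T w)%nat.
Proof.
  destruct (least_nat (fun k => anc T (Nat.iter k (@par T) x1) x2)) as [k [Hk Hmin]].
  - exists (depth T x1). rewrite (proj1 (depth_spec T x1)). apply anc_root.
  - exists (Nat.iter k par x1). split; [exists k; auto|]. split; auto.
    intros u [j Hj] Hu. subst u. specialize (Hmin j Hu). rewrite !depth_iter. lia.
Qed.

Lemma par_fix (T : tree) (x : V T) : par x = x -> x = root.
Proof.
  intros H. destruct (reach T x) as [k Hk]. rewrite <- Hk. clear Hk.
  induction k; simpl; auto. rewrite <- IHk. auto.
Qed.

Lemma point_eq (T : tree) (a b : point T) : pv a = pv b -> pt a = pt b -> a = b.
Proof.
  destruct a, b; simpl. intros; subst. f_equal; apply proof_irrelevance.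
Qed.


Lemma height_nonneg (T : tree) (a : point T) : 0 <= height a.
Proof.
  unfold height. destruct (Nat.eq_dec (depth T (pv a)) 0) as [Z|Z].
  - rewrite Z. rewrite (pt_root _ a (depth0 T _ Z)). simpl; lra.
  - assert (1 <= INR (depth T (pv a))) by (apply (le_INR 1); lia).
    pose proof (pt_pos _ a). lra.
Qed.

Lemma height_vpt (T : tree) (x : V T) : height (vpt x) = INR (depth T x).
Proof. unfold height, vpt; simpl; ring. Qed.

Lemma ple_refl (T : tree) (a : point T) : ple a a.
Proof. left; split; auto; lra. Qed.

Lemma ple_anc (T : tree) (c b : point T) : ple c b -> anc T (pv c) (pv b).
Proof. intros [[E _]|[_ H]]; auto. rewrite E; exists 0%nat; auto. Qed.

Lemma ple_height (T : tree) (c b : point T) : ple c b -> height c <= height b.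
Proof.
  intros [[E L]|[N H]].
  - unfold height; rewrite E; lra.
  - pose proof (anc_depth_lt T _ _ H N).
    unfold height. pose proof (pt_le1 _ c). pose proof (pt_pos _ b).
    assert (INR (depth T (pv c)) + 1 <= INR (depth T (pv b))).
    { rewrite <- S_INR. apply le_INR. lia. }
    lra.
Qed.

Definition mspec {T : tree} (a b : point T) (r : R) : Prop :=
  exists c, ple c a /\ ple c b /\ height c = r /\
              forall c', ple c' a -> ple c' b -> height c' <= r.

Lemma meet_eq (T : tree) (a b : point T) r : mspec a b r -> meet_height a b = r.
Proof.
  intros Hr. assert (Hm : mspec a b (meet_height a b)).
  { unfold meet_height. apply epsilon_spec. exists r; exact Hr. }
  destruct Hr as [c1 [A1 [B1 [E1 M1]]]]. destruct Hm as [c2 [A2 [B2 [E2 M2]]]].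
  pose proof (M1 _ A2 B2). pose proof (M2 _ A1 B1). lra.
Qed.

Lemma dist_ple (T : tree) (a b : point T) : ple a b -> dist a b = height b - height a.
Proof.
  intros H. unfold dist. rewrite (meet_eq T a b (height a)). ring.
  exists a. split; [apply ple_refl|]. split; auto. split; auto.
  intros c' H1 _. apply ple_height; auto.
Qed.

Lemma dist_sym (T : tree) (a b : point T) : dist a b = dist b a.
Proof.
  unfold dist. assert (meet_height a b = meet_height b a).
  { unfold meet_height. f_equal. extensionality r. apply propositional_extensionality.
    split; intros [c [H1 [H2 [H3 H4]]]]; exists c; repeat split; auto;
      intros c' X Y; apply H4; auto. }
  rewrite H; ring.
Qed.

Lemma dist_refl (T : tree) (a : point T) : dist a a = 0.
Proof. rewrite dist_ple by apply ple_refl. ring. Qed.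

Lemma ple_root (T : tree) (y : point T) : ple (droot T) y.
Proof.
  destruct (classic (pv y = root)) as [E|N].
  - left. simpl. split; auto. rewrite (pt_root _ y E). lra.
  - right. simpl. split; auto. apply anc_root.
Qed.

Lemma dist_root (T : tree) (y : point T) : dist (droot T) y = height y.
Proof.
  rewrite dist_ple by apply ple_root. unfold droot; rewrite height_vpt, depth_root. simpl; ring.
Qed.

Lemma subtree_anc (T : tree) c (y : point T) : subtree c y -> anc T c (pv y).
Proof. intros H. apply ple_anc in H. exact H. Qed.

Lemma subtree_vpt (T : tree) c (x : V T) : anc T c x -> subtree c (vpt x).
Proof.
  intros H. unfold subtree. destruct (classic (c = x)) as [E|N].
  - subst; apply ple_refl.
  - right; simpl; auto.
Qed.

Lemma height_ge (T : tree) (a : point T) k c :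
  Nat.iter k par (pv a) = c -> (pt a = 1 \/ (1 <= k)%nat) -> INR (depth T c) <= height a.
Proof.
  intros Hk Hp. pose proof (depth_iter T k (pv a)) as D. rewrite Hk in D.
  pose proof (height_nonneg T a).
  destruct Hp as [P|K].
  - unfold height. rewrite P. rewrite D.
    assert (INR (depth T (pv a) - k) <= INR (depth T (pv a))) by (apply le_INR; lia). lra.
  - destruct (Nat.eq_dec (depth T c) 0) as [Z|Z]. rewrite Z; simpl; lra.
    unfold height. pose proof (pt_pos _ a).
    assert (INR (depth T c) + 1 <= INR (depth T (pv a))) by (rewrite <- S_INR; apply le_INR; lia).
    lra.
Qed.

Lemma subtree_height (T : tree) c (y : point T) : subtree c y -> INR (depth T c) <= height y.
Proof.
  intros [[E L]|[N [k Hk]]].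
  - simpl in E, L. apply (height_ge T y 0). simpl; auto. left; pose proof (pt_le1 _ y); lra.
  - apply (height_ge T y k); auto. right. destruct k; simpl in Hk, N; [congruence|lia].
Qed.

Lemma exists_region (T : tree) (n : nat) (y : point T) : INR n <= height y ->
  exists c, depth T c = n /\ subtree c y.
Proof.
  intros H. unfold height in H. pose proof (pt_le1 _ y). pose proof (pt_pos _ y).
  assert (Hd : (n <= depth T (pv y))%nat).
  { apply INR_le. lra. }
  destruct (Nat.eq_dec (depth T (pv y)) n) as [E|E].
  - exists (pv y). split; auto. left. simpl. split; auto. rewrite E in H. lra.
  - exists (Nat.iter (depth T (pv y) - n) par (pv y)). split.
    + rewrite depth_iter. lia.
    + right. simpl. split.
      * intro X. assert (Y := f_equal (depth T) X). rewrite depth_iter in Y. lia.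
      * eexists; eauto.
Qed.

Lemma separation (T : tree) c1 c2 (y z : point T) :
  depth T c1 = depth T c2 -> c1 <> c2 -> subtree c1 y -> subtree c2 z -> 2 <= dist y z.
Proof.
  intros D N S1 S2. set (n := depth T c1).
  pose proof (subtree_height _ _ _ S1) as H1. pose proof (subtree_height _ _ _ S2) as H2.
  apply subtree_anc in S1. apply subtree_anc in S2.
  destruct (dca T (pv y) (pv z)) as [w [W1 [W2 Wm]]].
  assert (Dw : (depth T w < n)%nat).
  { destruct (le_lt_dec n (depth T w)) as [L|L]; auto. exfalso. apply N.
    apply (anc_same_depth T c1 c2 w); auto.
    - apply (anc_lin T c1 w (pv y)); auto.
    - apply (anc_lin T c2 w (pv z)); auto. rewrite <- D; auto. }
  unfold dist. rewrite (meet_eq T y z (INR (depth T w))).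
  - assert (INR (depth T w) + 1 <= INR n) by (rewrite <- S_INR; apply le_INR; lia).
    assert (INR (depth T c2) = INR n) as E2 by (unfold n; rewrite D; auto). unfold n in *; lra.
  - exists (vpt w). split; [|split; [|split]].
    + right. simpl. split; auto. intro E. pose proof (anc_depth T _ _ S1). subst w. unfold n in *. lia.
    + right. simpl. split; auto. intro E. pose proof (anc_depth T _ _ S2). subst w. unfold n in *. lia.
    + apply height_vpt.
    + intros c' P1 P2. apply ple_anc in P1. apply ple_anc in P2. pose proof (Wm _ P1 P2).
      unfold height. pose proof (pt_le1 _ c'). assert (INR (depth T (pv c')) <= INR (depth T w)) by (apply le_INR; auto). lra.
Qed.


Lemma local_const (T : tree) n c (y z : point T) : depth T c = n ->
  INR n <= height y -> INR n <= height z -> dist y z < 2 -> subtree c y -> subtree c z.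
Proof.
  intros D Hy Hz Hd S. destruct (exists_region T n z Hz) as [c2 [D2 S2]].
  destruct (classic (c = c2)) as [E|E]. subst; auto.
  exfalso. pose proof (separation T c c2 y z ltac:(congruence) E S S2). lra.
Qed.

Definition clamp (s : R) : R := Rmax 0 (Rmin s 1).

Lemma clamp_in s : 0 <= clamp s <= 1.
Proof. unfold clamp, Rmax, Rmin; repeat destruct Rle_dec; lra. Qed.

Lemma clamp_id s : 0 <= s <= 1 -> clamp s = s.
Proof. unfold clamp, Rmax, Rmin; repeat destruct Rle_dec; lra. Qed.

Lemma clamp_lip s t : Rabs (clamp s - clamp t) <= Rabs (s - t).
Proof.
  unfold clamp, Rmax, Rmin; repeat destruct Rle_dec; unfold Rabs; repeat destruct Rcase_abs; lra.
Qed.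

Lemma conn (T : tree) (g : R -> point T) (n : nat) (c : V T) :
  depth T c = n ->
  (forall s, 0 <= s <= 1 -> INR n <= height (g s)) ->
  (forall s, 0 <= s <= 1 -> exists del, 0 < del /\ forall s', 0 <= s' <= 1 ->
       Rabs (s - s') < del -> dist (g s) (g s') < 2) ->
  subtree c (g 0) -> forall s, 0 <= s <= 1 -> subtree c (g s).
Proof.
  intros D Hh Hc S0 s1 Hs1.
  destruct (classic (subtree c (g s1))) as [Y|Nn]; auto. exfalso.
  assert (P1 : 0 < s1).
  { destruct (Rle_lt_dec s1 0); auto. replace s1 with 0 in Nn by lra. tauto. }
  set (h := fun s => if excluded_middle_informative (subtree c (g (clamp s))) then 1 else 0).
  assert (Hloc : forall x, exists del, 0 < del /\ forall x', Rabs (x' - x) < del -> h x' = h x).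
  { intros x. destruct (Hc (clamp x) (clamp_in x)) as [del [Hdel Hd]].
    exists del. split; auto. intros x' Hx'.
    assert (Hdd : dist (g (clamp x)) (g (clamp x')) < 2).
    { apply Hd. apply clamp_in. eapply Rle_lt_trans. apply clamp_lip.
      rewrite Rabs_minus_sym; auto. }
    pose proof (Hh _ (clamp_in x)). pose proof (Hh _ (clamp_in x')).
    unfold h. destruct (excluded_middle_informative (subtree c (g (clamp x)))) as [A|A];
      destruct (excluded_middle_informative (subtree c (g (clamp x')))) as [B0|B0]; auto.
    - exfalso; apply B0. apply (local_const T n c (g (clamp x)) (g (clamp x'))); auto.
    - exfalso; apply A. apply (local_const T n c (g (clamp x')) (g (clamp x))); auto. rewrite dist_sym; auto. }
  set (k := fun s => h s - /2).
  assert (Hcont : continuity (fun s => - k s)).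
  { intros x. unfold continuity_pt, continue_in, limit1_in, limit_in. simpl. unfold R_dist.
    intros eps Heps. destruct (Hloc x) as [del [Hdel Hd]]. exists del. split; auto.
    intros x' [_ Hx']. unfold k. rewrite (Hd x' Hx'). replace (- (h x - / 2) - - (h x - / 2)) with 0 by ring.
    rewrite Rabs_R0; auto. }
  assert (h0 : h 0 = 1).
  { unfold h. rewrite clamp_id by lra. destruct excluded_middle_informative; tauto. }
  assert (h1 : h s1 = 0).
  { unfold h. rewrite clamp_id by lra. destruct excluded_middle_informative; tauto. }
  destruct (IVT (fun s => - k s) 0 s1 Hcont P1) as [z [_ Hz]].
  - unfold k; rewrite h0; lra.
  - unfold k; rewrite h1; lra.
  - unfold k, h in Hz. destruct excluded_middle_informative; lra.
Qed.


Lemma rmin_pos s : 0 < s -> 0 < Rmin s 1.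
Proof. intros; unfold Rmin; destruct Rle_dec; lra. Qed.

Definition epath (T : tree) (u : V T) (hu : u <> root) (s : R) : point T :=
  match Rlt_le_dec 0 s with
  | left H => Point T u (Rmin s 1) (rmin_pos s H) (Rmin_r s 1) (fun e => False_ind _ (hu e))
  | right _ => vpt (par u)
  end.

Lemma depth_pos (T : tree) (u : V T) : u <> root -> (1 <= depth T u)%nat.
Proof. intros hu. destruct (Nat.eq_dec (depth T u) 0) as [Z|Z]; [apply depth0 in Z; congruence|lia]. Qed.

Lemma dist_edge (T : tree) (u : V T) (hu : u <> root) (a : point T) :
  pv a = u -> dist (vpt (par u)) a = pt a.
Proof.
  intros E. rewrite dist_ple.
  - unfold height; simpl. rewrite E, depth_par. pose proof (depth_pos T u hu).
    rewrite minus_INR by lia. simpl. ring.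
  - right. simpl. rewrite E. split.
    + intro X. apply hu. apply par_fix; auto.
    + exists 1%nat. auto.
Qed.

Lemma dist_same (T : tree) (a b : point T) : pv a = pv b -> dist a b = Rabs (pt a - pt b).
Proof.
  intros E. destruct (Rle_dec (pt a) (pt b)).
  - rewrite dist_ple by (left; auto). unfold height; rewrite E.
    rewrite Rabs_left1 by lra. ring.
  - rewrite dist_sym, dist_ple by (left; split; auto; lra). unfold height; rewrite E.
    rewrite Rabs_right by lra. ring.
Qed.

Lemma epath_dist (T : tree) (u : V T) (hu : u <> root) s s' :
  0 <= s <= 1 -> 0 <= s' <= 1 -> dist (epath T u hu s) (epath T u hu s') <= Rabs (s - s').
Proof.
  intros Hs Hs'. unfold epath.
  destruct (Rlt_le_dec 0 s) as [A|A]; destruct (Rlt_le_dec 0 s') as [B0|B0].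
  - rewrite dist_same by reflexivity. simpl. rewrite !Rmin_left by lra. lra.
  - rewrite dist_sym. rewrite (dist_edge T u hu) by reflexivity. simpl. rewrite Rmin_left by lra.
    unfold Rabs; destruct Rcase_abs; lra.
  - rewrite (dist_edge T u hu) by reflexivity. simpl. rewrite Rmin_left by lra.
    unfold Rabs; destruct Rcase_abs; lra.
  - rewrite dist_refl. apply Rabs_pos.
Qed.

Lemma epath_pt (T : tree) (u : V T) (hu : u <> root) (a : point T) :
  pv a = u -> epath T u hu (pt a) = a.
Proof.
  intros E. unfold epath. destruct (Rlt_le_dec 0 (pt a)) as [A|A].
  - apply point_eq; simpl; auto. rewrite Rmin_left; auto. apply pt_le1.
  - pose proof (pt_pos _ a). lra.
Qed.

Lemma epath0 (T : tree) (u : V T) (hu : u <> root) : epath T u hu 0 = vpt (par u).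
Proof. unfold epath. destruct (Rlt_le_dec 0 0) as [X|X]; [exfalso; apply (Rlt_irrefl 0 X)|reflexivity]. Qed.

Lemma eta_height {T T' : tree} (f : point T -> point T') Phi n a :
  eta_seq f Phi -> (1 <= n)%nat -> INR (Phi n) <= height a -> INR n <= height (f a).
Proof.
  intros [_ H] Hn Ha. destruct (Rle_lt_dec (INR n) (height (f a))) as [L|L]; auto.
  exfalso. assert (B0 : ball (droot T') (INR n) (f a)) by (unfold ball; rewrite dist_root; auto).
  apply H in B0; auto. unfold ball in B0. rewrite dist_root in B0. lra.
Qed.

Lemma edge_step {T T' : tree} (f : point T -> point T') Phi n c c0 k u :
  rcp f -> eta_seq f Phi -> (1 <= n)%nat -> depth T c = Phi n -> depth T' c0 = n ->
  subtree c0 (f (vpt c)) -> Nat.iter (S k) par u = c ->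
  subtree c0 (f (vpt (par u))) -> forall a, pv a = u -> subtree c0 (f a).
Proof.
  intros [Hr [Hc Hp]] He Hn Dc D0 S0 Hu Hpp a Ha.
  destruct (classic (u = root)) as [R0|hu].
  - assert (a = vpt c) as ->; [|exact S0].
    apply point_eq; simpl.
    + rewrite Ha, <- Hu, R0, iter_root; auto.
    + apply pt_root; congruence.
  - rewrite <- (epath_pt T u hu a Ha).
    apply (conn T' (fun s => f (epath T u hu s)) n c0 D0).
    + intros s Hs; apply (eta_height f Phi n); auto; rewrite <- Dc.
      unfold epath; destruct (Rlt_le_dec 0 s).
      * apply (height_ge T _ (S k)); [exact Hu|right; lia].
      * apply (height_ge T _ k); [simpl; rewrite <- Nat.iter_succ_r; exact Hu|left; reflexivity].
    + intros s Hs; destruct (Hc (epath T u hu s) 2 ltac:(lra)) as [del [Hdel Hd]].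
      exists del; split; auto; intros s' Hs' Hss; apply Hd.
      eapply Rle_lt_trans; [apply epath_dist; auto|auto].
    + rewrite epath0; exact Hpp.
    + split; [apply Rlt_le, pt_pos|apply pt_le1].
Qed.

Lemma region_map {T T' : tree} (f : point T -> point T') Phi n c c0 :
  rcp f -> eta_seq f Phi -> (1 <= n)%nat -> depth T c = Phi n -> depth T' c0 = n ->
  subtree c0 (f (vpt c)) -> forall a, subtree c a -> subtree c0 (f a).
Proof.
  intros Hf He Hn Dc D0 S0.
  assert (L : forall k u, Nat.iter (S k) par u = c -> forall a, pv a = u -> subtree c0 (f a)).
  { induction k as [|k IH]; intros u Hu.
    - apply (edge_step f Phi n c c0 0 u); auto. simpl in Hu; rewrite Hu; exact S0.
    - apply (edge_step f Phi n c c0 (S k) u); auto.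
      apply (IH (par u)); [rewrite <- Nat.iter_succ_r; exact Hu|reflexivity]. }
  intros a [[E Le]|[N [k Hk]]].
  - simpl in E, Le. assert (a = vpt c) as -> by (apply point_eq; simpl; auto; pose proof (pt_le1 _ a); lra).
    exact S0.
  - destruct k as [|k]. simpl in Hk, N. congruence.
    apply (L k (pv a) Hk a eq_refl).
Qed.


Lemma pd_iter (T : tree) n k (x : V T) : pd (fun _ x => par x) n k x = Nat.iter k par x.
Proof.
  revert x. induction k; intros x; simpl; auto. rewrite IHk. rewrite <- Nat.iter_succ_r. reflexivity.
Qed.

Lemma pnm_iter (T : tree) n m x : pnm (eta_obj T) n m x = Nat.iter (m - n) par x.
Proof. unfold pnm. simpl. apply pd_iter. Qed.

Lemma anc_iter (T : tree) k (x : V T) : anc T (Nat.iter k par x) x.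
Proof. exists k; auto. Qed.

Lemma Phi_pos {T T' : tree} (f : point T -> point T') Phi n :
  rooted f -> eta_seq f Phi -> (1 <= n)%nat -> (1 <= Phi n)%nat.
Proof.
  intros Hr [_ H] Hn. assert (B0 : ball (droot T') (INR n) (f (droot T))).
  { unfold ball. rewrite Hr, dist_root. unfold droot; rewrite height_vpt, depth_root.
    apply lt_0_INR. lia. }
  apply H in B0; auto. unfold ball in B0. rewrite dist_root in B0.
  unfold droot in B0; rewrite height_vpt, depth_root in B0. simpl in B0.
  destruct (Phi n). simpl in B0; lra. lia.
Qed.

Lemma Phi_mono {T T' : tree} (f : point T -> point T') Phi n n' :
  eta_seq f Phi -> (1 <= n)%nat -> (n <= n')%nat -> (Phi n <= Phi n')%nat.
Proof.
  intros [H _] Hn Hle. induction Hle; auto. pose proof (H m ltac:(lia)). lia.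
Qed.

Fixpoint cum (K : nat -> nat) (n : nat) : nat :=
  match n with O => K O | S m => (cum K m + K (S m) + 1)%nat end.

Lemma cum_ge K n : (K n <= cum K n)%nat.
Proof. destruct n; simpl; lia. Qed.

Lemma nat_above (N : R) : exists K : nat, N <= INR K.
Proof. destruct (INR_unbounded N) as [K HK]. exists K; lra. Qed.

Lemma claim2 (T T' : tree) (f : point T -> point T') : rcp f -> exists Phi, eta_seq f Phi.
Proof.
  intros [Hr [Hc Hp]].
  set (P := fun n K => forall a, ball (droot T') (INR n) (f a) -> ball (droot T) (INR K) a).
  assert (HK : forall n, exists K, P n K).
  { intros n. destruct (Hp (INR (S n)) (lt_0_INR _ (Nat.lt_0_succ n))) as [N [HN HNb]].
    destruct (nat_above N) as [K HK]. exists K. intros a Ha. unfold ball in *.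
    assert (dist (droot T) a < N); [|lra]. apply HNb. rewrite S_INR. lra. }
  set (Kf := fun n => epsilon (inhabits 0%nat) (P n)).
  assert (HKf : forall n, P n (Kf n)) by (intros n; apply epsilon_spec, HK).
  exists (cum Kf). split.
  - intros n _. simpl. lia.
  - intros n a _ Ha. apply HKf in Ha. unfold ball in *. eapply Rlt_le_trans; [exact Ha|].
    apply le_INR, cum_ge.
Qed.

Lemma claim3 (T T' : tree) (f : point T -> point T') (Phi : nat -> nat) :
     rcp f -> eta_seq f Phi ->
     forall (n : nat) (c : V T), (1 <= n)%nat -> depth T c = Phi n ->
       exists! c' : V T', depth T' c' = n /\
                          forall a, subtree c a -> subtree c' (f a).
Proof.
  intros Hf He n c Hn Dc.
  assert (Hh : INR n <= height (f (vpt c))).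
  { apply (eta_height f Phi n); auto. rewrite height_vpt, Dc. lra. }
  destruct (exists_region T' n _ Hh) as [c0 [D0 S0]].
  exists c0. split.
  - split; auto. apply (region_map f Phi n c c0); auto.
  - intros c1 [D1 S1]. specialize (S1 (vpt c) (subtree_vpt T c c (anc_iter T 0 c))).
    apply (anc_same_depth T' c0 c1 (pv (f (vpt c)))); try apply subtree_anc; auto. congruence.
Qed.

Lemma data_anc {T T' : tree} (f : point T -> point T') (F : tmor (eta_obj T) (eta_obj T')) n m x :
  eta_data f F -> (1 <= n)%nat -> (tPhi F n <= m)%nat -> depth T x = m ->
  depth T' (tf F n (pnm (eta_obj T) (tPhi F n) m x)) = n /\
  anc T' (tf F n (pnm (eta_obj T) (tPhi F n) m x)) (pv (f (vpt x))).
Proof.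
  intros [He Hd] Hn Hm Dx. rewrite pnm_iter.
  assert (Dc : depth T (Nat.iter (m - tPhi F n) par x) = tPhi F n) by (rewrite depth_iter; lia).
  destruct (Hd n _ Hn Dc) as [D1 S1]. split; auto.
  apply subtree_anc, S1, subtree_vpt, anc_iter.
Qed.

Lemma claim4 (T T' : tree) (f : point T -> point T') (F : tmor (eta_obj T) (eta_obj T')) :
  rcp f -> eta_data f F -> is_tmor F.
Proof.
  intros [Hr _] Hd. pose proof Hd as [He Hd2]. split; [|split].
  - intros n Hn. apply (Phi_pos f); auto.
  - intros n x Hn Hx. simpl in *. apply (Hd2 n x Hn Hx).
  - intros n n' Hn Hnn. exists (tPhi F n'). pose proof (Phi_mono f _ n n' He Hn (Nat.lt_le_incl _ _ Hnn)).
    split; auto. split; auto. intros x Hx. simpl in Hx.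
    destruct (data_anc f F n (tPhi F n') x Hd Hn H Hx) as [D1 A1].
    destruct (data_anc f F n' (tPhi F n') x Hd ltac:(lia) (le_n _) Hx) as [D2 A2].
    rewrite (pnm_iter T' n n').
    apply (anc_same_depth T' _ _ (pv (f (vpt x)))); auto.
    + eapply anc_trans; [apply anc_iter|exact A2].
    + rewrite depth_iter, D2, D1. lia.
Qed.

Lemma claim5 (T T' : tree) (f g : point T -> point T') (F G : tmor (eta_obj T) (eta_obj T')) :
     rcp f -> rcp g -> rp_homotopic f g ->
     eta_data f F -> eta_data g G -> tmor_eq F G.
Proof.
  intros Hf Hg [H [Hc [H0 [H1 [_ Hp]]]]] HF HG n Hn.
  destruct (Hp (INR n) (lt_0_INR _ (Hn : (0 < n)%nat))) as [N [HN HNb]].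
  destruct (nat_above N) as [K HK].
  set (m := Nat.max K (Nat.max (tPhi F n) (tPhi G n))).
  exists m. split; [lia|]. split; [lia|]. intros x Hx. simpl in Hx.
  destruct (data_anc f F n m x HF Hn ltac:(lia) Hx) as [D1 A1].
  destruct (data_anc g G n m x HG Hn ltac:(lia) Hx) as [D2 A2].
  set (c0 := tf F n (pnm (eta_obj T) (tPhi F n) m x)) in *.
  assert (S0 : subtree c0 (H (vpt x) 0)).
  { rewrite H0. destruct HF as [_ Hd]. unfold c0; rewrite pnm_iter.
    assert (Dc : depth T (Nat.iter (m - tPhi F n) par x) = tPhi F n) by (rewrite depth_iter; lia).
    apply (proj2 (Hd n _ Hn Dc)). apply subtree_vpt, anc_iter. }
  assert (S1 : subtree c0 (H (vpt x) 1)).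
  { apply (conn T' (fun s => H (vpt x) s) n c0 D1); auto; [| |lra].
    - intros s Hs. destruct (Rle_lt_dec (INR n) (height (H (vpt x) s))) as [L|L]; auto.
      exfalso. assert (B0 : ball (droot T') (INR n) (H (vpt x) s)) by (unfold ball; rewrite dist_root; auto).
      apply (HNb _ s Hs) in B0. unfold ball in B0. rewrite dist_root, height_vpt, Hx in B0.
      assert (INR K <= INR m) by (apply le_INR; lia). lra.
    - intros s Hs. destruct (Hc (vpt x) s 2 Hs ltac:(lra)) as [del [Hdel Hd]].
      exists del. split; auto. intros s' Hs' Hss. apply Hd; auto. rewrite dist_refl; auto. }
  rewrite H1 in S1.
  apply (anc_same_depth T' _ _ (pv (g (vpt x)))); auto.
  - apply subtree_anc; auto.
  - congruence.
Qed.

Lemma claim6 (T : tree) (F : tmor (eta_obj T) (eta_obj T)) :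
     eta_data (fun a : point T => a) F -> tmor_eq F (tmor_id (eta_obj T)).
Proof.
  intros HF n Hn. exists (Nat.max (tPhi F n) n). simpl. split; [lia|]. split; [lia|].
  intros x Hx. destruct (data_anc _ F n (Nat.max (tPhi F n) n) x HF Hn (Nat.le_max_l _ _) Hx) as [D1 A1].
  simpl in A1. rewrite (pnm_iter T n).
  apply (anc_same_depth T _ _ x); auto. apply anc_iter. rewrite depth_iter. lia.
Qed.

Lemma claim7 (T T' T'' : tree) (f : point T -> point T') (g : point T' -> point T'')
          (F : tmor (eta_obj T) (eta_obj T')) (G : tmor (eta_obj T') (eta_obj T''))
          (H : tmor (eta_obj T) (eta_obj T'')) :
     rcp f -> rcp g -> eta_data f F -> eta_data g G ->
     eta_data (fun a => g (f a)) H -> tmor_eq (tmor_comp F G) H.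
Proof.
  intros Hf Hg HF HG HH n Hn. simpl.
  assert (Hpg : (1 <= tPhi G n)%nat) by (apply (Phi_pos g _ n (proj1 Hg) (proj1 HG) Hn)).
  exists (Nat.max (tPhi F (tPhi G n)) (tPhi H n)). split; [lia|]. split; [lia|].
  intros x Hx. simpl in Hx.
  destruct (data_anc f F (tPhi G n) (Nat.max (tPhi F (tPhi G n)) (tPhi H n)) x HF Hpg (Nat.le_max_l _ _) Hx) as [D1 A1].
  destruct (data_anc _ H n (Nat.max (tPhi F (tPhi G n)) (tPhi H n)) x HH Hn (Nat.le_max_r _ _) Hx) as [D3 A3]. simpl in A3.
  set (d1 := tf F (tPhi G n) (pnm (eta_obj T) (tPhi F (tPhi G n)) _ x)) in *.
  destruct HG as [_ HG2]. destruct (HG2 n d1 Hn D1) as [D2 S2].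
  apply (anc_same_depth T'' _ _ (pv (g (f (vpt x))))); auto.
  - apply subtree_anc, S2. destruct HF as [_ HF2].
    assert (Dc : depth T (pnm (eta_obj T) (tPhi F (tPhi G n)) (Nat.max (tPhi F (tPhi G n)) (tPhi H n)) x) = tPhi F (tPhi G n))
      by (rewrite pnm_iter, depth_iter; lia).
    apply (proj2 (HF2 _ _ Hpg Dc)). rewrite pnm_iter. apply subtree_vpt, anc_iter.
  - congruence.
Qed.

Theorem proposition5p4 :
  (* eta(T,v) is an object of Tower-Set *)
  (forall T : tree, is_tower (eta_obj T)) /\
  (* a sequence (t_n) as required exists *)
  (forall (T T' : tree) (f : point T -> point T'),
     rcp f -> exists Phi, eta_seq f Phi) /\
  (* for any such (t_n), f_n(c) is well defined (exists uniquely) *)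
  (forall (T T' : tree) (f : point T -> point T') (Phi : nat -> nat),
     rcp f -> eta_seq f Phi ->
     forall (n : nat) (c : V T), (1 <= n)%nat -> depth T c = Phi n ->
       exists! c' : V T', depth T' c' = n /\
                          forall a, subtree c a -> subtree c' (f a)) /\
  (* (f_n, Phi_f) is a morphism of Tower-Set *)
  (forall (T T' : tree) (f : point T -> point T') (F : tmor (eta_obj T) (eta_obj T')),
     rcp f -> eta_data f F -> is_tmor F) /\
  (* independence of choices and invariance under rooted proper homotopy *)
  (forall (T T' : tree) (f g : point T -> point T')
          (F G : tmor (eta_obj T) (eta_obj T')),
     rcp f -> rcp g -> rp_homotopic f g ->
     eta_data f F -> eta_data g G -> tmor_eq F G) /\
  (* identities *)
  (forall (T : tree) (F : tmor (eta_obj T) (eta_obj T)),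
     eta_data (fun a : point T => a) F -> tmor_eq F (tmor_id (eta_obj T))) /\
  (* composition *)
  (forall (T T' T'' : tree) (f : point T -> point T') (g : point T' -> point T'')
          (F : tmor (eta_obj T) (eta_obj T')) (G : tmor (eta_obj T') (eta_obj T''))
          (H : tmor (eta_obj T) (eta_obj T'')),
     rcp f -> rcp g -> eta_data f F -> eta_data g G ->
     eta_data (fun a => g (f a)) H -> tmor_eq (tmor_comp F G) H).
Proof.
  split; [|split; [|split; [|split; [|split; [|split]]]]].
  - intros T n x Hn Hx. simpl in *. rewrite depth_par. lia.
  - exact claim2.
  - exact claim3.
  - exact claim4.
  - exact claim5.
  - exact claim6.
  - exact claim7.
Qed.
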